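(* Fix $0<\gamma_1<\gamma_2$, $c\ge0$ and $d\ge0$, and let $\varphi(t)=D_{\gamma_1}(t)-cD_{\gamma_2}(t)+d$. Then: 1. The equation $\varphi(t)=0$ has a unique solution $t\in[\gamma_1,\gamma_2]$ if and only if $d\le cD_{\gamma_2}(\gamma_1)$. 2. If $d> cD_{\gamma_2}(\gamma_1)$, then the smallest value of $\varphi(t)$ over $t\in[\gamma_1,\gamma_2]$ is attained at $t=\gamma_1$ and equals $-cD_{\gamma_2}(\gamma_1)+d>0$. 3. If $d\le cD_{\gamma_2}(\gamma_1)$, the solution $t^*$ of $\varphi(t)=0$ in $[\gamma_1,\gamma_2]$ is given by $t^*=\dfrac{\gamma_2-\gamma_1-d}{\log(\gamma_2/\gamma_1)}$ when $c=1$, and when $c\neq1$ by $$t^*=\gamma_1^{1/(1-c)}\gamma_2^{-c/(1-c)}e^{z^*+1}=-\frac{\gamma_1+d-c\gamma_2}{(1-c)z^*},$$ where $z^*$ is a solution (given by an appropriate real branch of the Lambert $W$-function) of $$ze^z=-\frac1e\cdot\frac{1}{1-c}\Big(1+\frac{d-c\gamma_2}{\gamma_1}\Big)\Big(\frac{\gamma_2}{\gamma_1}\Big)^{c/(1-c)}.$$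
   Context: For $\gamma>0$ and $t\ge0$, $D_\gamma(t)=t\log(t/\gamma)-t+\gamma$ (natural logarithm). The Lambert $W$-function solves $W(x)e^{W(x)}=x$ for $x\ge-1/e$ and has two real branches $W_0$ (values $\ge-1$) and $W_{-1}$ (values $\le -1$). *)

(* Defs.v *)
From Stdlib Require Import Reals.
Open Scope R_scope.

(* D_gamma(t) = t log(t/gamma) - t + gamma  (used for t >= 0; at t = 0 Stdlib's
   ln 0 = 0 gives the correct value gamma). *)
Definition Dg (g t : R) : R := t * ln (t / g) - t + g.

Definition phi (g1 g2 c d t : R) : R := Dg g1 t - c * Dg g2 t + d.

Definition lambertK (g1 g2 c d : R) : R :=
  - (1 / exp 1) * (1 / (1 - c)) * (1 + (d - c * g2) / g1)
    * Rpower (g2 / g1) (c / (1 - c)).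

(* Main.v *)
Require Import Defs.
From Stdlib Require Import Reals Lra Psatz.
From Coquelicot Require Import Coquelicot.
Open Scope R_scope.

Lemma phi_cont g1 g2 c d a : 0 < g1 -> 0 < g2 -> 0 < a -> continuity_pt (phi g1 g2 c d) a.
Proof.
intros h1 h2 ha.
apply continuity_pt_filterlim.
apply (ex_derive_continuous (V:=R_NormedModule)).
unfold phi, Dg.
auto_derive.
split. apply Rdiv_lt_0_compat; lra. split. apply Rdiv_lt_0_compat; lra. tauto.
Qed.

Lemma ln_lt1 x : 0 < x -> x <> 1 -> ln x < x - 1.
Proof.
intros hx h1.
assert (ln x <> 0).
{ intro e. apply h1. rewrite <- (exp_ln x hx), e. apply exp_0. }
pose proof (exp_ineq1 (ln x) H). rewrite exp_ln in H0; lra.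
Qed.

Lemma ln_divR x y : 0 < x -> 0 < y -> ln (x / y) = ln x - ln y.
Proof.
intros hx hy. unfold Rdiv. rewrite ln_mult, ln_Rinv; try lra.
apply Rinv_0_lt_compat; lra.
Qed.

Lemma Dg_diff g s t : 0 < g -> 0 < s -> s < t ->
  (t - s) * ln (s / g) < Dg g t - Dg g s < (t - s) * ln (t / g).
Proof.
intros hg hs hst.
unfold Dg. rewrite !ln_divR by lra.
assert (L1 : ln (s / t) < s / t - 1).
{ apply ln_lt1. apply Rdiv_lt_0_compat; lra.
  intro e. assert (s = t) by (apply (f_equal (fun u => u * t)) in e; field_simplify in e; lra). lra. }
assert (L2 : ln (t / s) < t / s - 1).
{ apply ln_lt1. apply Rdiv_lt_0_compat; lra.
  intro e. assert (s = t) by (apply (f_equal (fun u => u * s)) in e; field_simplify in e; lra). lra. }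
rewrite !ln_divR in L1, L2 by lra.
assert (e1 : t * (s / t) = s) by (field; lra).
assert (e2 : s * (t / s) = t) by (field; lra).
split; nra.
Qed.

Lemma Dg_self g : 0 < g -> Dg g g = 0.
Proof. intros hg. unfold Dg. replace (g / g) with 1 by (field; lra). rewrite ln_1. ring. Qed.

Lemma phi_mono g1 g2 c d s t : 0 < g1 -> g1 < g2 -> 0 <= c ->
  g1 <= s -> s < t -> t <= g2 -> phi g1 g2 c d s < phi g1 g2 c d t.
Proof.
intros h1 h12 hc hs hst ht.
destruct (Dg_diff g1 s t) as [A _]; try lra.
destruct (Dg_diff g2 s t) as [_ B]; try lra.
assert (l1 : 0 <= ln (s / g1)).
{ rewrite ln_divR by lra. destruct (Req_dec s g1). subst; lra.
  pose proof (ln_increasing g1 s h1 ltac:(lra)). lra. }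
assert (l2 : ln (t / g2) <= 0).
{ rewrite ln_divR by lra. destruct (Req_dec t g2). subst; lra.
  pose proof (ln_increasing t g2 ltac:(lra) ltac:(lra)). lra. }
assert (p1 : 0 <= (t - s) * ln (s / g1)) by (apply Rmult_le_pos; lra).
assert (p2 : 0 <= c * ((t - s) * - ln (t / g2))).
{ apply Rmult_le_pos; [lra|]. apply Rmult_le_pos; lra. }
unfold phi. nra.
Qed.

Lemma phi_mono_le g1 g2 c d s t : 0 < g1 -> g1 < g2 -> 0 <= c ->
  g1 <= s -> s <= t -> t <= g2 -> phi g1 g2 c d s <= phi g1 g2 c d t.
Proof.
intros. destruct (Req_dec s t). subst; lra.
left. apply phi_mono; lra.
Qed.

Theorem lemma6 (g1 g2 c d : R) (hg1 : 0 < g1) (hg12 : g1 < g2)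
  (hc : 0 <= c) (hd : 0 <= d) :
  (* 1. *)
  ((exists! t, (g1 <= t <= g2) /\ phi g1 g2 c d t = 0) <-> d <= c * Dg g2 g1)
  /\
  (* 2. *)
  (c * Dg g2 g1 < d ->
     (forall t, g1 <= t <= g2 -> phi g1 g2 c d g1 <= phi g1 g2 c d t)
     /\ phi g1 g2 c d g1 = - c * Dg g2 g1 + d
     /\ 0 < - c * Dg g2 g1 + d)
  /\
  (* 3. *)
  (d <= c * Dg g2 g1 ->
     forall t, g1 <= t <= g2 -> phi g1 g2 c d t = 0 ->
       (c = 1 -> t = (g2 - g1 - d) / ln (g2 / g1))
       /\
       (c <> 1 ->
          exists z, z * exp z = lambertK g1 g2 c d
            /\ t = Rpower g1 (1 / (1 - c)) * Rpower g2 (- c / (1 - c)) * exp (z + 1)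
            /\ (g1 + d - c * g2 <> 0 ->
                  t = - (g1 + d - c * g2) / ((1 - c) * z)))).
Proof.
assert (phig1 : phi g1 g2 c d g1 = - c * Dg g2 g1 + d).
{ unfold phi. rewrite Dg_self by lra. ring. }
assert (phig2 : 0 < phi g1 g2 c d g2).
{ unfold phi. rewrite (Dg_self g2) by lra.
  destruct (Dg_diff g1 g1 g2) as [A _]; try lra.
  rewrite Dg_self in A by lra. replace (g1 / g1) with 1 in A by (field; lra).
  rewrite ln_1 in A. lra. }
split; [|split].
- split.
  + intros [t [[ht e] _]].
    pose proof (phi_mono_le g1 g2 c d g1 t hg1 hg12 hc ltac:(lra) ltac:(lra) ltac:(lra)).
    lra.
  + intros hle.
    assert (ex : exists t, (g1 <= t <= g2) /\ phi g1 g2 c d t = 0).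
    { destruct (Req_dec (phi g1 g2 c d g1) 0) as [e|ne].
      - exists g1. split; [lra|exact e].
      - destruct (Ranalysis5.IVT_interv (phi g1 g2 c d) g1 g2) as [z [hz ez]].
        + intros a ha. apply phi_cont; lra.
        + lra.
        + lra.
        + lra.
        + exists z; auto. }
    destruct ex as [t [ht e]]. exists t. split; [split; auto|].
    intros t' [ht' e'].
    destruct (Rtotal_order t t') as [l|[l|l]]; auto.
    * pose proof (phi_mono g1 g2 c d t t' hg1 hg12 hc ltac:(lra) l ltac:(lra)). lra.
    * pose proof (phi_mono g1 g2 c d t' t hg1 hg12 hc ltac:(lra) l ltac:(lra)). lra.
- intros hlt. split; [|split; [exact phig1|lra]].
  intros t ht. apply phi_mono_le; lra.
- intros hle t ht e.
  assert (ht0 : 0 < t) by lra.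
  unfold phi, Dg in e. rewrite !ln_divR in e by lra.
  split.
  + intros c1. subst c.
    assert (lp : 0 < ln (g2 / g1)).
    { rewrite ln_divR by lra. pose proof (ln_increasing g1 g2 hg1 hg12). lra. }
    rewrite ln_divR in lp |- * by lra.
    apply (Rmult_eq_reg_r (ln g2 - ln g1)); [|lra].
    field_simplify; [|lra]. nra.
  + intros c1.
    assert (c1' : 1 - c <> 0) by lra.
    set (lt := ln t) in *. set (l1 := ln g1) in *. set (l2 := ln g2) in *.
    set (z := lt - (l1 - c * l2) / (1 - c) - 1).
    assert (hz : t * (1 - c) * z = - (g1 + d - c * g2)).
    { assert (t * (1 - c) * z = (1 - c) * t * lt - t * l1 + c * t * l2 - t * (1 - c))
        by (unfold z; field; auto).
      nra. }
    exists z. split; [|split].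
    * unfold lambertK, Rpower.
      assert (ez : exp z = t * exp (- (l1 - c * l2) / (1 - c) - 1)).
      { unfold z. replace (lt - (l1 - c * l2) / (1 - c) - 1)
          with (lt + (- (l1 - c * l2) / (1 - c) - 1)) by (field; auto).
        rewrite exp_plus. unfold lt. rewrite exp_ln; auto. }
      rewrite ez.
      rewrite ln_divR by lra. fold l1 l2.
      assert (e1 : 1 / exp 1 = exp (-1)) by (replace (-1) with (- (1)) by ring; rewrite exp_Ropp; field; apply Rgt_not_eq, exp_pos).
      assert (e2 : 1 + (d - c * g2) / g1 = (g1 + d - c * g2) * exp (- l1)).
      { rewrite exp_Ropp. unfold l1. rewrite exp_ln by lra. field; lra. }
      rewrite e1, e2.
      assert (e3 : exp (- (l1 - c * l2) / (1 - c) - 1)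
                  = exp (-1) * exp (- l1) * exp (c / (1 - c) * (l2 - l1))).
      { rewrite <- !exp_plus. f_equal. field; auto. }
      rewrite e3.
      replace (z * (t * (exp (-1) * exp (- l1) * exp (c / (1 - c) * (l2 - l1)))))
        with ((t * (1 - c) * z) / (1 - c) * (exp (-1) * exp (- l1) * exp (c / (1 - c) * (l2 - l1))))
        by (field; auto).
      rewrite hz. field; auto.
    * unfold Rpower. rewrite <- !exp_plus.
      replace (1 / (1 - c) * ln g1 + - c / (1 - c) * ln g2 + (z + 1)) with lt
        by (unfold z; fold l1 l2; field; auto).
      unfold lt. rewrite exp_ln; auto.
    * intros hA.
      assert (z <> 0) by (intro z0; rewrite z0 in hz; apply hA; lra).
      rewrite <- hz. field; auto.
Qed.
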